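(* Let $(u_{n-1},u_{n-2},\dots,u_0)$ be a chain compatible with $(n-1,n-2,\dots,1)$ with $u_0=w_0$. Then $u_i\in S_n^{i\searrow}$ for every $i\in\{0,\dots,n-1\}$.
   Context: Permutations in one-line notation; $w_0=[n,\dots,1]$; $wt_{i,j}$ is $w$ with positions $i<j$ swapped; $\ell$ the number of inversions. $u\lessdot w$ iff $w=ut_{i,j}$, $i<j$, $\ell(w)=\ell(u)+1$; $u\lessdot_k w$ iff moreover $i\le k<j$. A $k$-chain $v_1\lessdot_k\cdots\lessdot_k v_d$ ($d\ge 1$) is increasing if the smaller of the two values exchanged at each step strictly increases along the chain. $(w_1,\dots,w_d)$ is compatible with $(k_1,\dots,k_{d-1})$ if for each $s$ there is an increasing $k_s$-chain from $w_s$ to $w_{s+1}$. $S_n^{k\searrow}=\{v\in S_n:v(k+1)>\dots>v(n)\}$ for $k\in\{0,\dots,n-1\}$. *)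

(* Defs.v *)
(* Permutations of {1..n} are represented as 'S_n (perms of
   'I_n = {0..n-1}); position p (1-indexed) is the ordinal p-1, and the
   one-line notation of w is [w 0; ...; w (n-1)] (values shifted down by 1). *)
From mathcomp Require Import all_boot all_order all_fingroup.
Set Implicit Arguments. Unset Strict Implicit. Unset Printing Implicit Defensive.

Definition ell n (w : 'S_n) : nat :=
  #|[set pq : 'I_n * 'I_n | (pq.1 < pq.2) && (w pq.2 < w pq.1)]|.

Definition w0 n : 'S_n := perm (@rev_ord_inj n).

(* u <._k w with label a = the smaller of the two exchanged values:
   w = u t_{i,j} (positions i<j swapped), i <= k < j in 1-indexed positions,
   i.e. i < k <= j for 0-indexed ordinals, and ell w = ell u + 1. *)
Definition kcover n (k : nat) (u w : 'S_n) (a : nat) : Prop :=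
  exists i j : 'I_n,
    [/\ i < j, i < k <= j,
        (forall p, w p = u (tperm i j p)),
        ell w = (ell u).+1
      & a = minn (u i) (u j)].

(* increasing k-chain u = v_1 <._k v_2 <._k ... <._k v_d = w (d >= 1),
   vs = [v_2; ...; v_d], ls = labels of the successive steps *)
Definition inc_kchain n (k : nat) (u w : 'S_n) : Prop :=
  exists (vs : seq 'S_n) (ls : seq nat),
    [/\ size ls = size vs,
        last u vs = w,
        (forall t, t < size vs ->
           kcover k (nth u (u :: vs) t) (nth u vs t) (nth 0 ls t))
      & sorted ltn ls].

Definition compatible n (ws : seq 'S_n) (ks : seq nat) : Prop :=
  [/\ 0 < size ws, size ks = (size ws).-1
    & forall s, s < size ks ->
        inc_kchain (nth 0 ks s) (nth 1%g ws s) (nth 1%g ws s.+1)].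

(* S_n^{k\searrow} : v(k+1) > ... > v(n)  (1-indexed positions) *)
Definition Sdesc n (k : nat) (v : 'S_n) : Prop :=
  forall p q : 'I_n, k <= p -> p < q -> v q < v p.

(* Main.v *)
Require Import Defs.
From mathcomp Require Import all_boot all_order all_fingroup.
From mathcomp Require Import zify.
Set Implicit Arguments. Unset Strict Implicit. Unset Printing Implicit Defensive.

Section L.
Variables (n : nat) (x y : 'S_n) (a b : 'I_n).
Hypothesis ab : a < b.
Hypothesis xab : x a < x b.
Hypothesis yx : forall p, y p = x (tperm a b p).

Definition Inv (z : 'S_n) := [set pq : 'I_n * 'I_n | (pq.1 < pq.2) && (z pq.2 < z pq.1)].

Definition phi (pq : 'I_n * 'I_n) : 'I_n * 'I_n :=
  if tperm a b pq.1 < tperm a b pq.2 then (tperm a b pq.1, tperm a b pq.2) else pq.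

Lemma phi_inj : {in Inv x &, injective phi}.
Proof.
move=> [p q] [p' q']; rewrite !inE /= => /andP[pq _] /andP[pq' _].
rewrite /phi /=.
case: ifP => h1; case: ifP => h2 [e1 e2].
- by rewrite -(tpermK a b p) e1 tpermK -(tpermK a b q) e2 tpermK.
- by move: h2; rewrite -e1 -e2 !tpermK pq.
- by move: h1; rewrite e1 e2 !tpermK pq'.
- by rewrite e1 e2.
Qed.

Lemma yab : y b < y a.
Proof. by rewrite !yx tpermL tpermR. Qed.

Lemma phi_in pq : pq \in Inv x ->
  [/\ phi pq \in Inv y, phi pq != (a, b) &
      forall c : 'I_n, a < c < b -> x a < x c -> phi pq != (a, c)].
Proof.
case: pq => p q; rewrite !inE /= => /andP[pq xpq].
have anb : a != b by rewrite neq_ltn ab.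
rewrite /phi /=; case: ifP => h.
- split.
  + by rewrite /= h !yx !tpermK.
  + apply/negP => /eqP [e1 e2].
    move: pq; rewrite -(tpermK a b p) -(tpermK a b q) e1 e2 tpermL tpermR.
    by move=> /(ltn_trans ab); rewrite ltnn.
  + move=> c /andP[ac cb] _; apply/negP => /eqP [e1 e2].
    have cna : a != c by rewrite neq_ltn ac.
    have cnb : b != c by rewrite neq_ltn cb orbT.
    move: pq; rewrite -(tpermK a b p) -(tpermK a b q) e1 e2 tpermL tpermD //.
    by move=> /(ltn_trans cb); rewrite ltnn.
- rewrite /= !yx; move: h.
  case: (tpermP a b p) => [pa|pb|pna pnb]; case: (tpermP a b q) => [qa|qb|qna qnb];
    (try subst p); (try subst q) => h.
  + by rewrite ltnn in pq.
  + by move: xpq; rewrite ltnNge ltnW.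
  + split.
    * by rewrite pq (ltn_trans xpq xab).
    * by apply/negP => /eqP [e]; apply: qnb.
    * move=> c _ xac; apply/negP => /eqP [e]; subst.
      by move: xpq; rewrite ltnNge ltnW.
  + by move: pq; rewrite ltnNge ltnW.
  + by rewrite ltnn in pq.
  + by move: h; rewrite (ltn_trans ab pq).
  + by move: h; rewrite (ltn_trans pq ab).
  + split.
    * rewrite pq; exact: ltn_trans xab xpq.
    * by apply/negP => /eqP [e]; exact: (pna e).
    * by move=> c _ _; apply/negP => /eqP [e _]; exact: (pna e).
  + by move: h; rewrite pq.
Qed.

Lemma ell_lt : ell x < ell y.
Proof.
have -> : ell x = #|phi @: Inv x| by rewrite card_in_imset //; exact: phi_inj.
have -> : ell y = #|Inv y| by [].
rewrite (cardsD1 (a, b) (Inv y)) inE /= ab yab /= add1n ltnS.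
apply: subset_leq_card; apply/subsetP => z /imsetP [pq pqin ->].
by case: (phi_in pqin) => h1 h2 _; rewrite in_setD1 h2 h1.
Qed.

Lemma ell_lt2 (c : 'I_n) : a < c < b -> x a < x c < x b -> (ell x).+1 < ell y.
Proof.
move=> /andP[ac cb] /andP[xac xcb].
have -> : ell x = #|phi @: Inv x| by rewrite card_in_imset //; exact: phi_inj.
have -> : ell y = #|Inv y| by [].
have cnb : c != b by rewrite neq_ltn cb.
rewrite (cardsD1 (a, b) (Inv y)) inE /= ab yab /= add1n ltnS.
rewrite (cardsD1 (a, c) (Inv y :\ (a,b))) !inE /= xpair_eqE eqxx /= cnb /= ac.
rewrite !yx tpermL tpermD ?xcb; first last.
- by rewrite neq_ltn cb orbT.
- by rewrite neq_ltn ac.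
rewrite andbT add1n ltnS.
apply: subset_leq_card; apply/subsetP => z /imsetP [pq pqin ->].
case: (phi_in pqin) => h1 h2 h3; rewrite !in_setD1 h2 h1 andbT.
by rewrite h3 // ac cb.
Qed.
End L.
Lemma step n k (u w : 'S_n) l : kcover k u w l -> Sdesc k w -> Sdesc k u.
Proof.
case=> i [j] [ij /andP[ik kj] hw hell _] sw.
have hu : forall p, u p = w (tperm i j p) by move=> p; rewrite hw tpermK.
have inj : i != j by rewrite neq_ltn ij.
have wji : w j < w i.
  case: (ltngtP (w j) (w i)) => // [h|/val_inj/perm_inj e].
  - have := ell_lt ij h (fun p => hu p); rewrite hell ltnNge leqnSn //.
  - by rewrite e eqxx in inj.
have noc : forall c : 'I_n, i < c < j -> w j < w c -> w i < w c.
  move=> c icj wjc; case: (ltngtP (w i) (w c)) => // [h|/val_inj/perm_inj e].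
  - have hu' : forall p, w p = u (tperm i j p) by [].
    case/andP: icj => ic cj.
    have cni : c != i by rewrite neq_ltn ic orbT.
    have cnj : c != j by rewrite neq_ltn cj.
    have uij : u i < u j by rewrite !hu tpermL tpermR.
    have := @ell_lt2 n u w i j ij uij hu' c.
    rewrite ic cj !hu tpermL tpermR tpermD 1?eq_sym // wjc h.
    by move=> /(_ isT isT); rewrite hell ltnn.
  - by case/andP: icj; rewrite e ltnn.
move=> p q kp pq; rewrite !hu.
case: (tpermP i j p) => [pa|pb|pna pnb]; case: (tpermP i j q) => [qa|qb|qna qnb];
  (try subst p); (try subst q).
all: try by move: (leq_trans ik kp); rewrite ltnn.
all: try by move: (leq_trans ik (leq_trans kp (ltnW pq))); rewrite ltnn.
- by rewrite ltnn in pq.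
- exact: ltn_trans (sw _ _ kj pq) wji.
- apply: noc; last exact: sw _ _ kp pq.
  by rewrite pq (leq_trans ik kp).
- exact: sw.
Qed.

Lemma chain n k (u w : 'S_n) : inc_kchain k u w -> Sdesc k w -> Sdesc k u.
Proof.
case=> vs [ls] [_ <- hc _].
elim: vs u ls hc => [|v vs IH] u ls hc //= sw.
apply: (step (hc 0 isT)) => /=.
apply: (IH v (behead ls)) => // t ht.
have := hc t.+1 ht; rewrite nth_behead /=.
by rewrite [nth u (v :: vs) t](set_nth_default v) 1?[nth u vs t](set_nth_default v) //= ltnW.
Qed.

Theorem corollary3p8 (n : nat) (u : nat -> 'S_n) :
  compatible [seq u (n.-1 - s) | s <- iota 0 n]
             [seq n.-1 - s | s <- iota 0 n.-1] ->
  u 0 = w0 n ->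
  forall i, i < n -> Sdesc i (u i).
Proof.
case=> _ _ hc hu0; elim=> [_|i IH lt].
  rewrite hu0 => p q _ pq; rewrite !permE /=.
  by rewrite ltn_sub2l // (leq_ltn_trans _ (ltn_ord q)) // -ltnS prednK // (leq_ltn_trans _ (ltn_ord q)).
have hs : n.-1 - i.+1 < size [seq n.-1 - s | s <- iota 0 n.-1].
  rewrite size_map size_iota; lia.
have := hc _ hs.
rewrite (nth_map 0); last by rewrite size_iota; lia.
rewrite (nth_map 0); last by rewrite size_iota; lia.
rewrite (nth_map 0); last by rewrite size_iota; lia.
rewrite !nth_iota; try lia.
have -> : n.-1 - (0 + (n.-1 - i.+1)) = i.+1 by lia.
have -> : n.-1 - (0 + (n.-1 - i.+1).+1) = i by lia.
move/chain; apply.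
move=> p q ip pq; apply: (IH (ltnW lt)) => //; exact: ltnW.
Qed.
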